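(* Let $\sigma=\{\sigma_i\mid i\in I\}$ be a partition of the set of all primes and let $G$ be a finite group. If $G$ is a special $P\sigma T$-group, then $G$ is a $P\sigma T$-group.
   Context: All groups are finite. $\sigma=\{\sigma_i\mid i\in I\}$ is a partition of the set $\mathbb{P}$ of primes. For $n\in\mathbb{N}$, $\sigma(n)=\{\sigma_i\mid \sigma_i\cap\pi(n)\ne\emptyset\}$ with $\pi(n)$ the primes dividing $n$; $\sigma(G)=\sigma(|G|)$. A group is $\sigma$-primary if $|\sigma(G)|\le1$ and $\sigma$-nilpotent if it is a direct product of $\sigma$-primary groups. A Hall $\sigma_i$-subgroup of $G$ is a subgroup whose order has all prime divisors in $\sigma_i$ and whose index has none in $\sigma_i$. $G^{\mathfrak{N}_\sigma}$ is the intersection of all normal subgroups $N$ of $G$ with $G/N$ $\sigma$-nilpotent. A power automorphism of $D$ is an automorphism mapping every subgroup of $D$ onto itself. $G$ is a special $P\sigma T$-group if $D=G^{\mathfrak{N}_\sigma}$ is contained in a Hall $\sigma_i$-subgroup $E$ of $G$ for some $i$ and: (a) $D$ is a Hall subgroup of $G$ and conjugation by every element of $G$ is a power automorphism of $D$; (b) $D$ has a normal complement $S$ in $E$. A complete Hall $\sigma$-set of $G$ is a set $\mathcal{H}$ of subgroups such that every nontrivial member is a Hall $\sigma_i$-subgroup for some $i$ and $\mathcal{H}$ contains exactly one Hall $\sigma_i$-subgroup of $G$ for each $\sigma_i\in\sigma(G)$. A subgroup $A$ is $\sigma$-quasinormal in $G$ if $G$ has a complete Hall $\sigma$-set $\mathcal{H}$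 with $AH^x=H^xA$ for all $H\in\mathcal{H}$, $x\in G$. $G$ is a $P\sigma T$-group if whenever $K$ is $\sigma$-quasinormal in $H$ and $H$ is $\sigma$-quasinormal in $G$, then $K$ is $\sigma$-quasinormal in $G$. *)

(* Defs.v *)
From mathcomp Require Import all_boot all_fingroup.
From mathcomp Require Import all_solvable.
Set Implicit Arguments.
Unset Strict Implicit.
Unset Printing Implicit Defensive.
Local Open Scope group_scope.

(* A partition sigma = {sigma_i | i in I} of the primes is encoded by a map
   [sigma : nat -> nat] sending each prime p to the index i of the unique
   block sigma_i containing p (index set I = nat). *)

Definition sig (sigma : nat -> nat) (i : nat) : nat_pred := [pred p | sigma p == i].

Definition in_sigma_n (sigma : nat -> nat) (n i : nat) : Prop :=
  exists2 p, p \in \pi(n) & sigma p = i.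

Definition sigma_primary (sigma : nat -> nat) (gT : finGroupType) (G : {set gT}) : Prop :=
  forall i j, in_sigma_n sigma #|G| i -> in_sigma_n sigma #|G| j -> i = j.

Definition sigma_nilpotent (sigma : nat -> nat) (gT : finGroupType) (G : {set gT}) : Prop :=
  exists s : seq {group gT},
    \big[dprod/1]_(H <- s) (H : {set gT}) = G /\
    (forall H, H \in s -> sigma_primary sigma H).

Definition is_sigma_nil_residual (sigma : nat -> nat) (gT : finGroupType)
    (G D : {set gT}) : Prop :=
  forall x : gT, x \in D <->
    (forall N : {group gT}, N <| G -> sigma_nilpotent sigma (G / N) -> x \in N).

Definition conj_power_aut (gT : finGroupType) (G D : {set gT}) : Prop :=
  forall x, x \in G -> forall H : {group gT}, H \subset D -> H :^ x = H.

Definition special_PsT (sigma : nat -> nat) (gT : finGroupType) (G : {group gT}) : Prop :=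
  exists D : {group gT}, is_sigma_nil_residual sigma G D /\
  exists (i : nat) (E : {group gT}),
    [/\ (sig sigma i).-Hall(G) E, D \subset E,
        Hall G D /\ conj_power_aut G D
      & exists S : {group gT}, S ><| D = E].

Definition complete_Hall_sigma_set (sigma : nat -> nat) (gT : finGroupType)
    (G : {group gT}) (HH : {set {group gT}}) : Prop :=
  (forall H : {group gT}, H \in HH -> H :!=: 1 ->
      exists i, (sig sigma i).-Hall(G) H) /\
  (forall i, in_sigma_n sigma #|G| i ->
      exists! H : {group gT}, H \in HH /\ (sig sigma i).-Hall(G) H).

Definition sigma_quasinormal (sigma : nat -> nat) (gT : finGroupType)
    (G A : {group gT}) : Prop :=
  A \subset G /\
  exists HH : {set {group gT}}, complete_Hall_sigma_set sigma G HH /\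
    forall H : {group gT}, H \in HH -> forall x, x \in G ->
      A * (H :^ x) = (H :^ x) * A.

Definition PsT (sigma : nat -> nat) (gT : finGroupType) (G : {group gT}) : Prop :=
  forall K H : {group gT},
    sigma_quasinormal sigma H K -> sigma_quasinormal sigma G H ->
    sigma_quasinormal sigma G K.

(* Main.v *)
Require Import Defs.
From mathcomp Require Import all_boot all_fingroup all_solvable.
From Stdlib Require Import ClassicalEpsilon.
Set Implicit Arguments.
Unset Strict Implicit.
Unset Printing Implicit Defensive.
Local Open Scope group_scope.

Definition pb (P : Prop) : bool := if excluded_middle_informative P then true else false.
Lemma pbP (P : Prop) : reflect P (pb P).
Proof. by rewrite /pb; case: excluded_middle_informative => h; constructor. Qed.

Lemma signil_split sigma (rT : finGroupType) (Q : {group rT}) j :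
  sigma_nilpotent sigma Q ->
  exists P R : {group rT}, [/\ P \x R = Q, (sig sigma j).-group P & (sig sigma j)^'.-group R].
Proof.
case=> s [defQ prim].
rewrite (bigID (fun H : {group rT} => (sig sigma j).-group H)) /= in defQ.
have [[P R dP dR] _ _ _] := dprodP defQ.
exists P, R; split; first by rewrite -dP -dR.
- rewrite /pgroup -(bigdprod_card dP).
  rewrite big_seq_cond; apply: (big_ind (fun n => _.-nat n)) => //; first by move=> m n; rewrite pnatM => ->.
  by move=> H /andP[_].
- rewrite /pgroup -(bigdprod_card dR).
  rewrite big_seq_cond; apply: (big_ind (fun n => _.-nat n)) => //; first by move=> m n; rewrite pnatM => ->.
  move=> H /andP[sH nH]; apply/pgroupP => p pr_p pdv.
  rewrite !inE; apply: contra nH => /eqP sp.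
  apply/pgroupP => q pr_q qdv; rewrite inE -sp; apply/eqP.
  apply: (prim H sH); [exists q | exists p] => //.
  + by rewrite mem_primes pr_q cardG_gt0.
  + by rewrite mem_primes pr_p cardG_gt0.
Qed.

Lemma selem_in_pcore sigma (rT : finGroupType) (Q : {group rT}) j y :
  sigma_nilpotent sigma Q -> y \in Q -> (sig sigma j).-elt y -> y \in 'O_(sig sigma j)(Q).
Proof.
move=> nilQ Qy ey; have [P [R [defQ pP pR]]] := signil_split j nilQ.
have [nsPQ _] := dprod_normal2 defQ.
have hallP : (sig sigma j).-Hall(Q) P.
  apply/pHallP; split; first exact: normal_sub.
  rewrite -(dprod_card defQ) partnM ?cardG_gt0 // part_pnat_id // part_p'nat //.
  by rewrite muln1.
apply: (subsetP (pcore_max pP nsPQ)).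
by rewrite (mem_normal_Hall hallP nsPQ Qy).
Qed.

Lemma prime_of_elt (gT : finGroupType) (p : nat) (b : gT) : p.-elt b -> b != 1 -> prime p.
Proof.
move=> pb nb; rewrite -order_gt1 in nb.
have := pnatPpi pb (_ : pdiv #[b] \in \pi(#[b])); rewrite pi_pdiv nb => /(_ isT).
by rewrite inE => /eqP <-; apply: pdiv_prime.
Qed.

Lemma hallU (gT : finGroupType) pi1 pi2 (X H1 H2 V : {group gT}) :
  pi1.-Hall(X) H1 -> pi2.-Hall(X) H2 -> H1 \subset V -> H2 \subset V -> V \subset X ->
  [predU pi1 & pi2].-group V -> [predU pi1 & pi2].-Hall(X) V.
Proof.
move=> h1 h2 s1 s2 sVX pV; rewrite /pHall sVX pV /=.
have d1 := indexgS X s1; have d2 := indexgS X s2.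
have n1 : pi1^'.-nat #|X : V| by apply: pnat_dvd d1 _; case/and3P: h1.
have n2 : pi2^'.-nat #|X : V| by apply: pnat_dvd d2 _; case/and3P: h2.
rewrite (eq_pnat _ (_ : _ =i [predI pi1^' & pi2^'])); last first.
  by move=> q; rewrite !inE negb_or.
by rewrite pnatI n1 n2.
Qed.

Lemma hallI (gT : finGroupType) pi (X U A : {group gT}) :
  pi.-Hall(X) U -> A \subset X -> A * U = U * A -> pi.-Hall(A) (A :&: U).
Proof.
move=> hU sAX cAU.
have pAU : pi.-group (A :&: U) := pgroupS (subsetIr _ _) (pHall_pgroup hU).
apply/pHallP; split; first exact: subsetIl.
have gY : group_set (A * U) by apply/comm_group_setP.
pose Y := Group gY.
have sYX : Y \subset X by rewrite /= mul_subG // (pHall_sub hU).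
have e := mul_cardG A U.
apply/eqP; rewrite eqn_leq; apply/andP; split.
  rewrite -(part_pnat_id pAU); apply: dvdn_leq; first exact: part_gt0.
  by apply: partn_dvd; rewrite ?cardG_gt0 ?cardSg ?subsetIl.
have e2 : (#|A|`_pi * #|U| = #|(A * U)%g|`_pi * #|A :&: U|)%N.
  have := congr1 (fun n => partn n pi) e.
  rewrite !partnM ?cardG_gt0 //; last by have := cardG_gt0 Y.
  by rewrite (part_pnat_id (pHall_pgroup hU)) (part_pnat_id pAU).
have le1 : #|(A * U)%g|`_pi <= #|U|.
  rewrite (card_Hall hU); apply: dvdn_leq; first exact: part_gt0.
  by apply: partn_dvd; rewrite ?cardG_gt0 // (cardSg sYX).
rewrite -(leq_pmul2r (cardG_gt0 U)) e2 mulnC leq_mul2l le1 orbT.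
by [].
Qed.

Section Main.
Variables (sigma : nat -> nat) (gT : finGroupType) (G D E S : {group gT}) (i : nat).
Hypotheses (HresD : is_sigma_nil_residual sigma G D)
  (hallE : (sig sigma i).-Hall(G) E) (sDE : D \subset E) (hallD : Hall G D)
  (powD : conj_power_aut G D) (defE : S ><| D = E).

Lemma sDG : D \subset G. Proof. by case/andP: hallD. Qed.

Lemma nsDG : D <| G.
Proof.
rewrite /normal sDG; apply/subsetP => x Gx; rewrite inE.
by rewrite (powD Gx (subxx D)).
Qed.

Lemma nsubD (M : {group gT}) : M \subset D -> M <| G.
Proof.
move=> sMD; rewrite /normal (subset_trans sMD sDG); apply/subsetP => x Gx.
by rewrite inE (powD Gx sMD).
Qed.

Lemma hallD' : \pi(D).-Hall(G) D. Proof. exact: Hall_pi. Qed.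

Lemma memD x : x \in G -> (x \in D) = \pi(D).-elt x.
Proof. exact: mem_normal_Hall hallD' nsDG. Qed.

Lemma powJ x d : x \in G -> d \in D -> d ^ x \in <[d]>.
Proof.
move=> Gx Dd; have := powD Gx (_ : <[d]>%G \subset D); rewrite cycle_subG => /(_ Dd) <-.
by rewrite memJ_conjg cycle_id.
Qed.

Lemma piD_i p : p \in \pi(D) -> sigma p = i.
Proof.
move=> pD; have pDi : (sig sigma i).-group D := pgroupS sDE (pHall_pgroup hallE).
have := pnatPpi pDi pD; rewrite /sig inE; exact: eqP.
Qed.

Lemma pD_elt x : x \in D -> \pi(D).-elt x.
Proof. by move=> Dx; apply: (mem_p_elt (pnat_pi (cardG_gt0 D)) Dx). Qed.

Definition famb (N : {group gT}) : bool := pb (N <| G /\ sigma_nilpotent sigma (G / N)).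

Definition W j : {group gT} :=
  [group of G :&: \bigcap_(N | famb N) coset N @*^-1 'O_(sig sigma j)(G / N)].

Lemma W_sub j : W j \subset G. Proof. exact: subsetIl. Qed.

Lemma memW j x : (x \in W j) = (x \in G) &&
  [forall N, famb N ==> (x \in coset N @*^-1 'O_(sig sigma j)(G / N))].
Proof.
rewrite inE; congr (_ && _); apply/bigcapP/forallP => [h N | h N fN].
  by apply/implyP => fN; apply: h.
by have := h N; rewrite fN.
Qed.

Lemma famP N : famb N -> N <| G /\ sigma_nilpotent sigma (G / N).
Proof. by move/pbP. Qed.

Lemma W_conj j x g : x \in W j -> g \in G -> x ^ g \in W j.
Proof.
rewrite !memW => /andP[Gx /forallP h] Gg; rewrite groupJ //=.
apply/forallP => N; apply/implyP => fN; have [nsNG _] := famP fN.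
have nNG := normal_norm nsNG.
move: (h N); rewrite fN /= => /morphpreP[Nx Ox].
have Ng := subsetP nNG g Gg.
apply/morphpreP; split; first by rewrite groupJ.
rewrite morphJ // memJ_norm //.
exact: (subsetP (normal_norm (pcore_normal _ _)) _ (mem_quotient _ Gg)).
Qed.

Lemma nsWG j : W j <| G.
Proof.
rewrite /normal W_sub; apply/subsetP => g Gg; rewrite inE.
apply/subsetP => y /imsetP[x Wx ->]; exact: W_conj.
Qed.

Lemma W_D j : D \subset W j.
Proof.
apply/subsetP => d Dd; rewrite memW (subsetP sDG) //=.
apply/forallP => N; apply/implyP => fN; have [nsNG nilN] := famP fN.
have DN : d \in N by apply/(HresD d).1.
apply/morphpreP; split; first exact: (subsetP (normal_norm nsNG) d (subsetP sDG d Dd)).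
by rewrite /= coset_id // group1.
Qed.

Lemma W_elt j x : x \in G -> (sig sigma j).-elt x -> x \in W j.
Proof.
move=> Gx ex; rewrite memW Gx /=.
apply/forallP => N; apply/implyP => fN; have [nsNG nilN] := famP fN.
have Nx := subsetP (normal_norm nsNG) x Gx.
apply/morphpreP; split => //.
apply: selem_in_pcore nilN _ _; first exact: mem_quotient.
exact: morph_p_elt.
Qed.

Lemma elt1 (rT : finGroupType) pi (z : rT) : pi.-elt z -> pi^'.-elt z -> z = 1.
Proof. by move=> e1 e2; rewrite -(constt_p_elt e1); apply/constt1P. Qed.

Lemma W_part j x : x \in W j -> x.`_((sig sigma j)^') \in D.
Proof.
move=> Wx; set y := x.`_(_).
have Wy : y \in W j by rewrite groupX.
have := Wy; rewrite memW => /andP[Gy /forallP h].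
apply/(HresD y).2 => N nsNG nilN.
have fN : famb N by apply/pbP.
move: (h N); rewrite fN /= => /morphpreP[Ny Oy].
apply: coset_idr => //; apply: (@elt1 _ (sig sigma j)).
  exact: mem_p_elt (pcore_pgroup _ _) Oy.
by apply: morph_p_elt => //; apply: p_elt_constt.
Qed.

Definition rho j := [predU sig sigma j & \pi(D)].

Lemma W_pgroup j : (rho j).-group (W j).
Proof.
apply/pgroupP => p pr_p pdv; have [x Wx ox] := Cauchy pr_p pdv.
rewrite !inE; case: (boolP (sigma p == j)) => //= spj.
have ex : (sig sigma j)^'.-elt x by rewrite /p_elt ox pnatE // !inE spj.
have := W_part Wx; rewrite (constt_p_elt ex) => Dx.
by rewrite -ox; apply: (pnatPpi (pD_elt Dx)); rewrite ox pi_of_prime // inE.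
Qed.

Lemma rho_i : {subset rho i <= sig sigma i}.
Proof. by move=> q; rewrite !inE => /orP[// | /piD_i ->]. Qed.

Lemma W_i_sub_E : W i \subset E.
Proof.
apply: normal_sub_max_pgroup (Hall_max hallE) _ (nsWG i).
exact: sub_pgroup rho_i (W_pgroup i).
Qed.

Lemma E_elt x : x \in G -> (sig sigma i).-elt x -> x \in E.
Proof. by move=> Gx ex; apply: (subsetP W_i_sub_E); apply: W_elt. Qed.

Lemma S_facts : [/\ S <| E, D \subset 'N(S), S :&: D = 1 & D <| E].
Proof.
have [nsSE sDE' _ nSD tSD] := sdprod_context defE.
by split=> //; apply: normalS sDE (pHall_sub hallE) nsDG.
Qed.

Lemma S_cent s d : s \in S -> d \in D -> commute s d.
Proof.
move=> Ss Dd; have [nsSE nSD tSD nsDE] := S_facts.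
apply/commgP; suff: [~ s, d] \in S :&: D by rewrite tSD inE.
rewrite inE; apply/andP; split.
  by rewrite commgEl groupM ?groupV // memJ_norm // (subsetP nSD).
rewrite commgEr groupM // memJ_norm ?groupV //.
by apply: (subsetP (normal_norm nsDE)); apply: (subsetP (normal_sub nsSE)).
Qed.

Lemma S_hall : \pi(D)^'.-Hall(E) S.
Proof.
have [nsSE nSD tSD nsDE] := S_facts.
have cS := sdprod_card defE.
have sEG := pHall_sub hallE.
have eSED : #|S| = #|E : D|.
  by apply/eqP; rewrite -(eqn_pmul2l (cardG_gt0 D)) (Lagrange sDE) mulnC cS.
have eESD : #|E : S| = #|D|.
  by apply/eqP; rewrite -(eqn_pmul2l (cardG_gt0 S)) (Lagrange (normal_sub nsSE)) cS.
rewrite /pHall (normal_sub nsSE) /pgroup eESD pnatNK pnat_pi ?cardG_gt0 // andbT.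
rewrite -coprime_pi' ?cardG_gt0 // eSED.
case/andP: hallD => _ co; apply: coprime_dvdr co.
exact: indexSg sDE sEG.
Qed.

Lemma S_mem x : x \in E -> \pi(D)^'.-elt x -> x \in S.
Proof. by move=> Ex ex; have [nsSE _ _ _] := S_facts; rewrite (mem_normal_Hall S_hall nsSE). Qed.

Lemma TD_group (T : {group gT}) : T \subset G -> T <*> D = T * D.
Proof. by move=> sTG; rewrite norm_joinEl // (subset_trans sTG) // normal_norm // nsDG. Qed.

Lemma W_TD j (T : {group gT}) : (sig sigma j).-Hall(G) T -> W j :=: T <*> D.
Proof.
move=> hT; have sTG := pHall_sub hT.
have sVG : T <*> D \subset G by rewrite join_subG sTG sDG.
have pV : (rho j).-group (T <*> D).
  rewrite TD_group // pgroupM; apply/andP; split.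
    by apply: sub_pgroup (pHall_pgroup hT) => q qj; rewrite /rho inE qj.
  by apply: sub_pgroup (pnat_pi (cardG_gt0 D)) => q qD; rewrite !inE qD orbT.
have hV := hallU hT hallD' (joing_subl _ _) (joing_subr _ _) sVG pV.
apply: sub_pHall hV (W_pgroup j) _ (W_sub j).
rewrite join_subG W_D andbT; apply/subsetP => t Tt.
by apply: W_elt (subsetP sTG t Tt) (mem_p_elt (pHall_pgroup hT) Tt).
Qed.

Lemma prime_of_elt' (p : nat) (b : gT) : p.-elt b -> b != 1 -> prime p /\ p %| #[b].
Proof.
move=> pb nb; have pr := prime_of_elt pb nb; split=> //.
rewrite -order_gt1 in nb.
have := pnatPpi pb (_ : pdiv #[b] \in \pi(#[b])); rewrite pi_pdiv nb => /(_ isT).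
by rewrite inE => /eqP <-; apply: pdiv_dvd.
Qed.

Lemma sig_piD j q : j != i -> q \in sig sigma j -> q \in \pi(D)^'.
Proof.
move=> ji; rewrite /sig !inE => /eqP qj; apply: contra ji => /piD_i.
by rewrite qj => ->.
Qed.

Lemma necL (X A : {group gT}) :
  X \subset G -> sigma_quasinormal sigma X A -> (X :&: D) \subset 'N(A).
Proof.
move=> sXG [sAX [HH [[HH1 HH2] perm]]].
have sAG := subset_trans sAX sXG.
apply/subsetP => l /setIP[Xl Dl]; have Gl := subsetP sXG l Xl.
rewrite inE; apply/subsetP => y /imsetP[a Aa ->].
suff: a \in A :&: A :^ l^-1 by rewrite inE mem_conjgV => /andP[].
rewrite -(prod_constt a); apply: group_prod => p _.
set b := a.`_p.
have Ab : b \in A by rewrite (subsetP _ _ (cycle_constt p a)) // cycle_subG.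
have Gb : b \in G := subsetP sAG b Ab.
rewrite inE Ab mem_conjgV /=.
have eb : p.-elt b := p_elt_constt p a.
case: (eqVneq b 1) => [-> | nb]; first by rewrite conj1g group1.
have [pr_p pdvb] := prime_of_elt' eb nb.
case: (boolP (p \in \pi(D))) => pD.
  have Db : b \in D by rewrite memD // (sub_p_elt _ eb) // => q; rewrite inE => /eqP->.
  have bl := powJ Gl Db.
  by apply: (subsetP _ _ bl); rewrite cycle_subG.
have eb' : \pi(D)^'.-elt b.
  by apply: sub_p_elt eb => q; rewrite inE => /eqP->; rewrite inE pD.
have ebj : (sig sigma (sigma p)).-elt b.
  by apply: sub_p_elt eb => q; rewrite inE => /eqP->; rewrite /sig inE.
case: (eqVneq (sigma p) i) => spi.
  have Eb : b \in E by apply: E_elt Gb _; rewrite -spi.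
  have Sb := S_mem Eb eb'.
  by rewrite conjgE (S_cent Sb Dl) mulKg.
set j := sigma p in ebj spi.
have pX : in_sigma_n sigma #|X| j.
  exists p => //; rewrite mem_primes pr_p cardG_gt0 /=.
  exact: dvdn_trans pdvb (order_dvdG (subsetP sAX b Ab)).
have [U [[HHU hU] _]] := HH2 _ pX.
have cAU l' : l' \in X -> A * U :^ l' = U :^ l' * A := perm U HHU l'.
have hAU : (sig sigma j).-Hall(A) (A :&: U).
  by apply: hallI hU sAX _; have := cAU 1 (group1 X); rewrite conjsg1.
have hAD : \pi(D).-Hall(A) (D :&: A) := setI_normal_Hall nsDG hallD' sAG.
have nMG : (D :&: A) <| G := nsubD (subsetIl _ _).
have sAUG : A :&: U \subset G := subset_trans (subsetIl _ _) sAG.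
pose V := ((A :&: U) <*> (D :&: A))%G.
have eV : V :=: (A :&: U) * (D :&: A).
  by rewrite /= norm_joinEl // (subset_trans sAUG) // normal_norm.
have pV : (rho j).-group V.
  rewrite eV pgroupM; apply/andP; split.
    by apply: sub_pgroup (pHall_pgroup hAU) => q qj; rewrite /rho inE qj.
  by apply: sub_pgroup (pHall_pgroup hAD) => q qD; rewrite !inE qD orbT.
have sVA : V \subset A by rewrite join_subG subsetIl subsetIr.
have hV : (rho j).-Hall(A) V := hallU hAU hAD (joing_subl _ _) (joing_subr _ _) sVA pV.
have sVAW : V \subset A :&: W j.
  rewrite join_subG; apply/andP; split; rewrite subsetI ?subsetIl ?subsetIr /=.
    apply/subsetP => u /setIP[Au Uu].
    exact: W_elt (subsetP sAG u Au) (mem_p_elt (pHall_pgroup hU) Uu).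
  exact: subset_trans (subsetIl _ _) (W_D j).
have eAW : (A :&: W j) :=: V.
  exact: sub_pHall hV (pgroupS (subsetIr _ _) (W_pgroup j)) sVAW (subsetIl _ _).
have : b \in V by rewrite -eAW inE Ab W_elt.
rewrite eV => /mulsgP[u m /setIP[Au Uu] /setIP[Dm Am] ->].
have Gu := subsetP sAG u Au.
rewrite conjMg groupM //; last first.
  by apply: (subsetP _ _ (powJ Gl Dm)); rewrite cycle_subG.
have gY : group_set (A * U :^ l) by apply/comm_group_setP; apply: cAU Xl.
pose Y := Group gY.
have sUG := subset_trans (pHall_sub hU) sXG.
have sYG : Y \subset G by rewrite /= mul_subG // conj_subG.
have c_in : [~ u, l] \in D :&: Y.
  rewrite inE; apply/andP; split.
    rewrite commgEr groupM // memJ_norm ?groupV //.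
    exact: (subsetP (normal_norm nsDG) u Gu).
  have Yu : u \in Y by rewrite /= -[u]mulg1 mem_mulg.
  have Yul : u ^ l \in Y by rewrite /= -[u ^ l]mul1g mem_mulg ?memJ_conjg.
  by rewrite commgEl groupM ?groupV.
have eDY : D :&: Y = D :&: A.
  apply/eqP; rewrite eq_sym eqEcard setIS ?mulG_subl //=.
  rewrite (card_Hall hAD) (card_Hall (setI_normal_Hall nsDG hallD' sYG)).
  have e := mul_cardG A (U :^ l).
  have pU' : \pi(D)^'.-group (U :^ l).
    by rewrite /pgroup cardJg; apply: sub_pgroup (pHall_pgroup hU) => q; apply: sig_piD.
  have := congr1 (fun n => partn n \pi(D)) e.
  rewrite !partnM ?cardG_gt0 //; last by have := cardG_gt0 Y.
  rewrite (part_p'nat pU') muln1 => ->.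
  by rewrite leq_pmulr // part_gt0.
have cA : [~ u, l] \in A by move: c_in; rewrite eDY => /setIP[].
by rewrite -(mulKVg u (u ^ l)) -commgEl groupM.
Qed.

Lemma constt_mem (A : {group gT}) pi x : x \in A -> x.`_pi \in A.
Proof. by move=> Ax; apply: (subsetP _ _ (cycle_constt pi x)); rewrite cycle_subG. Qed.

Lemma liftN (H K : {group gT}) :
  H \subset G -> D \subset 'N(H) -> (H :&: D) \subset 'N(K) -> K \subset H -> D \subset 'N(K).
Proof.
move=> sHG nHD nKHD sKH.
apply/subsetP => d Dd; have Gd := subsetP sDG d Dd.
rewrite inE; apply/subsetP => y /imsetP[k Kk ->].
have Gk := subsetP (subset_trans sKH sHG) k Kk.
rewrite -(consttC \pi(D) k) conjMg groupM //.
  have Dk1 : k.`_(\pi(D)) \in D by rewrite memD ?constt_mem ?p_elt_constt.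
  by apply: (subsetP _ _ (powJ Gd Dk1)); rewrite cycle_subG constt_mem.
set kk := k.`_(_).
have Kkk : kk \in K by rewrite constt_mem.
have Gkk : kk \in G by rewrite constt_mem.
have ekk : \pi(D)^'.-elt kk by apply: p_elt_constt.
pose C := <[d]>%G; pose A0 := <[kk]>%G.
have nCA : A0 \subset 'N(C).
  by rewrite cycle_subG inE (powD Gkk) // cycle_subG.
have coCA : coprime #|C| #|A0| by apply: pnat_coprime (pD_elt Dd) ekk.
have TI := coprime_abel_cent_TI nCA coCA (cycle_abelian d).
set Y := [~: C, A0] in TI.
have sYC : Y \subset C by rewrite commg_subl.
have sYH : Y \subset H.
  apply: subset_trans (commgSS (_ : C \subset D) (_ : A0 \subset H)) _.
  - by rewrite cycle_subG.
  - by rewrite cycle_subG (subsetP sKH).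
  by rewrite commg_subr.
have sYHD : Y \subset H :&: D by rewrite subsetI sYH (subset_trans sYC) // cycle_subG.
have nYA : A0 \subset 'N(Y) := commg_normr _ _.
pose f z := [~ z, kk].
have fY z : z \in Y -> f z \in Y.
  by move=> Yz; rewrite /f commgEl groupM ?groupV // memJ_norm // (subsetP nYA) // cycle_id.
have fK z : z \in Y -> f z \in K.
  move=> Yz; rewrite /f commgEr groupM // memJ_norm ?groupV //.
  by apply: (subsetP nKHD); apply: (subsetP sYHD).
have finj : {in Y &, injective f}.
  move=> z1 z2 Y1 Y2 e.
  have Yw : z2 * z1^-1 \in Y by rewrite groupM ?groupV.
  have h1 : z1 ^ kk = z1 * f z1 by rewrite /f commgEl mulKVg.
  have h2 : z2 ^ kk = z2 * f z1 by rewrite e /f commgEl mulKVg.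
  have hfx : (z2 * z1^-1) ^ kk = z2 * z1^-1.
    by rewrite conjMg conjVg h1 h2 invMg mulgA mulgK.
  have : z2 * z1^-1 \in 'C_Y(A0).
    by rewrite inE Yw cent_cycle; apply/cent1P/commgP/conjg_fixP.
  by rewrite TI inE -eq_mulgV1 => /eqP.
have eY : f @: Y = Y.
  apply/eqP; rewrite eqEcard card_in_imset // leqnn andbT.
  by apply/subsetP => _ /imsetP[z Yz ->]; apply: fY.
have dk : [~ d, kk] \in K.
  have : [~ d, kk] \in Y := mem_commg (cycle_id d) (cycle_id kk).
  by rewrite -eY => /imsetP[z Yz ->]; apply: fK.
by rewrite -(mulKVg kk (kk ^ d)) -commgEl -invg_comm groupM ?groupV.
Qed.

Lemma T_normal_i (T : {group gT}) : (sig sigma i).-Hall(G) T -> T <| G.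
Proof.
move=> hT; have sDT : D \subset T.
  apply: normal_sub_max_pgroup (Hall_max hT) _ nsDG.
  exact: pgroupS sDE (pHall_pgroup hallE).
by rewrite -(joing_idPl sDT) -(W_TD hT) nsWG.
Qed.

Lemma suffP (A T : {group gT}) j :
  A \subset G -> D \subset 'N(A) -> (sig sigma j).-Hall(G) T -> A * T = T * A.
Proof.
move=> sAG nAD hT.
have sTG := pHall_sub hT.
pose M := (D :&: A)%G.
have nsMG : M <| G := nsubD (subsetIl _ _).
have sMA : M \subset A := subsetIr _ _.
have nMG := normal_norm nsMG.
suff key : forall a, a \in A -> forall t, t \in T -> t * a \in A * T.
  have sTA : T * A \subset A * T.
    by apply/subsetP => _ /mulsgP[t a Tt Aa ->]; apply: key.
  apply/eqP; rewrite eq_sym eqEcard sTA /=.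
  have e1 := mul_cardG A T; have e2 := mul_cardG T A.
  rewrite setIC mulnC e1 in e2.
  by rewrite leq_eqVlt -(eqn_pmul2r (cardG_gt0 (A :&: T))) e2 eqxx.
case: (eqVneq j i) => [ji | nji].
  move: hT; rewrite ji => hT a Aa t Tt.
  have nTG := normal_norm (T_normal_i hT).
  rewrite -(mulKVg a (t * a)) mem_mulg // -conjgE memJ_norm //.
  exact: (subsetP nTG a (subsetP sAG a Aa)).
move=> a Aa; rewrite -(prod_constt a).
apply: (big_ind (fun x => forall t, t \in T -> t * x \in A * T)).
- by move=> t Tt; rewrite mulg1 -[t]mul1g mem_mulg.
- move=> x y hx hy t Tt; case/mulsgP: (hx t Tt) => a1 t1 Aa1 Tt1 e.
  rewrite mulgA e -mulgA; case/mulsgP: (hy t1 Tt1) => a2 t2 Aa2 Tt2 ->.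
  by rewrite mulgA mem_mulg ?groupM.
move=> p _ t Tt.
set b := a.`_p.
have Ab : b \in A by rewrite constt_mem.
have Gb : b \in G := subsetP sAG b Ab.
have Gt : t \in G := subsetP sTG t Tt.
have Nb : b \in 'N(M) := subsetP nMG b Gb.
have eb : p.-elt b := p_elt_constt p a.
case: (eqVneq b 1) => [-> | nb]; first by rewrite mulg1 -[t]mul1g mem_mulg.
have [pr_p pdvb] := prime_of_elt' eb nb.
case: (boolP (p \in \pi(D))) => pD.
  have Db : b \in D by rewrite memD // (sub_p_elt _ eb) // => q; rewrite inE => /eqP->.
  rewrite (conjgCV t b) mem_mulg // (subsetP sMA) // memJ_norm ?groupV //.
    by rewrite inE Db.
  exact: subsetP nMG t Gt.
have eb' : \pi(D)^'.-elt b.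
  by apply: sub_p_elt eb => q; rewrite inE => /eqP->; rewrite inE pD.
have ebk : (sig sigma (sigma p)).-elt b.
  by apply: sub_p_elt eb => q; rewrite inE => /eqP->; rewrite /sig inE.
set k := sigma p in ebk.
have Wb : b \in W k := W_elt Gb ebk.
case: (eqVneq k j) => [kj | nkj].
  move: Wb; rewrite kj (W_TD hT) TD_group // => /mulsgP[t0 d0 Tt0 Dd0 ebtd].
  have Gd0 := subsetP sDG d0 Dd0; have Gt0 := subsetP sTG t0 Tt0.
  have Nd0 := subsetP nMG d0 Gd0; have Nt0 := subsetP nMG t0 Gt0.
  have cM : [~ b, d0] \in M.
    rewrite inE; apply/andP; split.
      rewrite commgEr groupM // memJ_norm ?groupV //.
      exact: (subsetP (normal_norm nsDG) b Gb).
    by rewrite commgEl groupM ?groupV // memJ_norm // (subsetP nAD).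
  have cbd : commute (coset M b) (coset M d0).
    by apply/commgP; rewrite -morphR //; apply/eqP; apply: coset_id.
  have ft0 : coset M t0 = coset M b * (coset M d0)^-1 by rewrite ebtd morphM // mulgK.
  have ctd : commute (coset M t0) (coset M d0).
    by rewrite ft0; apply: commute_sym; apply: commuteM; [apply: commute_sym | apply/commuteV].
  have et0 : \pi(D)^'.-elt t0.
    by apply: sub_p_elt (mem_p_elt (pHall_pgroup hT) Tt0) => q; apply: sig_piD.
  have fd0 : coset M d0 = 1.
    have e1 : b.`_(\pi(D)) = 1 by apply/constt1P.
    have e2 : (coset M t0).`_(\pi(D)) = 1 by apply/constt1P; apply: morph_p_elt.
    have h1 : (coset M b).`_(\pi(D)) = 1 by rewrite -morph_constt // e1 morph1.
    move: h1; rewrite ebtd morphM // (consttM _ ctd).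
    rewrite e2 mul1g constt_p_elt //.
    exact: morph_p_elt (pD_elt Dd0).
  have Md0 : d0 \in M := coset_idr Nd0 fd0.
  rewrite ebtd mulgA.
  rewrite (conjgCV (t * t0) d0) mem_mulg //; last exact: groupM.
  rewrite (subsetP sMA) // memJ_norm ?groupV //.
  exact: subsetP nMG _ (groupM Gt Gt0).
have Wjt : t \in W j := W_elt Gt (mem_p_elt (pHall_pgroup hT) Tt).
have Nt : t \in 'N(M) := subsetP nMG t Gt.
have Wjc : [~ t, b] \in W j by rewrite commgEl groupM ?groupV // W_conj.
have Wkc : [~ t, b] \in W k by rewrite commgEr groupM // W_conj ?groupV.
have Gc : [~ t, b] \in G by rewrite groupR.
have Nc : [~ t, b] \in 'N(M) := subsetP nMG _ Gc.
have Dc : [~ t, b] \in D.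
  have ec : (sig sigma j)^'.-elt [~ t, b].
    apply: mem_p_elt (sub_pgroup _ (W_pgroup k)) Wkc => q.
    rewrite /rho /sig !inE => /orP[/eqP-> | /piD_i ->] //.
    by rewrite eq_sym.
  by rewrite -(constt_p_elt ec) W_part.
have cM : [~ b, [~ t, b]] \in M.
  rewrite inE; apply/andP; split.
    rewrite commgEr groupM // memJ_norm ?groupV //.
    exact: (subsetP (normal_norm nsDG) b Gb).
  by rewrite commgEl groupM ?groupV // memJ_norm // (subsetP nAD).
have cbc : commute (coset M b) (coset M [~ t, b]).
  by apply/commgP; rewrite -morphR //; apply/eqP; apply: coset_id.
have ht : coset M t ^ coset M b = coset M t * coset M [~ t, b].
  by rewrite -morphJ // -morphM // commgEl mulKVg.
have hn n : coset M t ^ (coset M b ^+ n) = coset M t * coset M [~ t, b] ^+ n.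
  elim: n => [|n IH]; first by rewrite expg0 conjg1 mulg1.
  rewrite expgSr conjgM IH conjMg ht conjXg.
  have -> : coset M [~ t, b] ^ coset M b = coset M [~ t, b].
    by apply/conjg_fixP/commgP/commute_sym.
  by rewrite -mulgA -expgS.
have hb : coset M b ^+ #[b] = 1 by rewrite -morphX // expg_order morph1.
have hc1 : coset M [~ t, b] ^+ #[b] = 1.
  have := hn #[b]; rewrite hb conjg1 => /esym.
  by rewrite -[X in _ = X]mulg1 => /mulgI.
have ordc : #[coset M [~ t, b]] %| #[b] by rewrite order_dvdn hc1.
have fc1 : coset M [~ t, b] = 1.
  apply/eqP; rewrite -order_eq1; apply/eqP; apply: (@pnat_1 \pi(D)).
    exact: morph_p_elt (pD_elt Dc).
  exact: pnat_dvd ordc eb'.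
have Mc := coset_idr Nc fc1.
rewrite (conjgC t b) (_ : t ^ b = [~ t, b] ^ t^-1 * t); last first.
  by rewrite -conjgCV commgEl mulKVg.
rewrite mulgA mem_mulg // groupM // (subsetP sMA) // memJ_norm ?groupV //.
Qed.

Lemma main_in : PsT sigma G.
Proof.
move=> K H qKH qHG.
have [sHG [HH [cHH permH]]] := qHG.
have nHD : D \subset 'N(H) by have := necL (subxx G) qHG; rewrite (setIidPr sDG).
have nKHD := necL sHG qKH.
have sKH := qKH.1.
have nKD := liftN sHG nHD nKHD sKH.
have sKG := subset_trans sKH sHG.
split => //; exists HH; split => // T HT x Gx.
case: (eqVneq (T : {set gT}) 1) => [-> | nT].
  by rewrite conjs1g mulg1 mul1g.
have [j hT] := cHH.1 T HT nT.
apply: (@suffP K (T :^ x)%G j sKG nKD).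
by rewrite pHallJ.
Qed.

End Main.

Unset Implicit Arguments.

Theorem lemma3p1 (sigma : nat -> nat) (gT : finGroupType) (G : {group gT}) :
  special_PsT sigma G -> PsT sigma G.
Proof.
case=> D [HD [i [E [hallE sDE [hallD powD] [S defE]]]]].
exact: (main_in HD hallE sDE hallD powD defE).
Qed.
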